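(* Let $A,G$ be $n\times n$ symmetric matrices with $G\succeq A\succ0$. Then for any $u\in\mathbb{R}^n\setminus\{0\}$, $$V(A,G)-V(A,\mathrm{SR1}(A,G,u))=\ln\left(1+\nu^2(A,G,u)\right).$$
   Context: $V(A,G)=\ln\det(GA^{-1})$. $\nu(A,G,u)=\left(\frac{u^\top(G-A)G^{-1}(G-A)u}{u^\top(A-AG^{-1}A)u}\right)^{1/2}$ for $G\succeq A$, with the convention (used in the paper) that $\nu(A,G,u)=0$ when $(G-A)u=0$. $\mathrm{SR1}(A,G,u)=G$ if $(G-A)u=0$, and otherwise $\mathrm{SR1}(A,G,u)=G-\frac{(G-A)uu^\top(G-A)}{u^\top(G-A)u}$. *)

(* Defs.v *)
From HB Require Import structures.
From mathcomp Require Import all_boot all_order all_algebra.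
From mathcomp Require Import all_classical all_reals all_analysis.
Set Implicit Arguments. Unset Strict Implicit. Unset Printing Implicit Defensive.
Import Order.TTheory GRing.Theory Num.Theory.
Local Open Scope ring_scope.

Section Defs.
Variable R : realType.

Definition qform n (M : 'M[R]_n) (u : 'cV[R]_n) : R := (u^T *m M *m u) 0 0.

Definition symmat n (M : 'M[R]_n) : Prop := M^T = M.

Definition posdef n (M : 'M[R]_n) : Prop :=
  symmat M /\ forall u : 'cV[R]_n, u != 0 -> 0 < qform M u.

Definition psd n (M : 'M[R]_n) : Prop :=
  symmat M /\ forall u : 'cV[R]_n, 0 <= qform M u.

Definition Vpot n (A G : 'M[R]_n) : R := ln (\det (G *m invmx A)).

Definition nu n (A G : 'M[R]_n) (u : 'cV[R]_n) : R :=
  if (G - A) *m u == 0 then 0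
  else Num.sqrt (qform ((G - A) *m invmx G *m (G - A)) u /
                 qform (A - A *m invmx G *m A) u).

Definition SR1 n (A G : 'M[R]_n) (u : 'cV[R]_n) : 'M[R]_n :=
  if (G - A) *m u == 0 then G
  else G - (qform (G - A) u)^-1 *: ((G - A) *m u *m u^T *m (G - A)).

End Defs.

(* Main.v *)
Require Import Defs.
From HB Require Import structures.
From mathcomp Require Import all_boot all_order all_algebra.
From mathcomp Require Import all_classical all_reals all_analysis.
From mathcomp Require Import ring lra.
Set Implicit Arguments. Unset Strict Implicit.
Import Order.TTheory GRing.Theory Num.Theory.
Local Open Scope ring_scope.

Section Helpers.
Variable R : realType.

Lemma rank1_det n (x y : 'cV[R]_n) :
  \det (1%:M - x *m y^T) = 1 - (y^T *m x) 0 0.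
Proof.
have E1 : block_mx (1%:M : 'M[R]_n) 0 (y^T) (1%:M : 'M[R]_1) *m
          block_mx 1%:M x 0 (1%:M - (y^T) *m x)
        = block_mx 1%:M x (y^T) 1%:M.
  by rewrite mulmx_block !mulmx1 !mul1mx !mulmx0 !mul0mx !addr0 ?add0r addrC subrK.
have E2 : block_mx (1%:M - x *m y^T) x 0 (1%:M : 'M[R]_1) *m
          block_mx (1%:M : 'M[R]_n) 0 (y^T) (1%:M : 'M[R]_1)
        = block_mx 1%:M x (y^T) 1%:M.
  by rewrite mulmx_block !mulmx1 !mul1mx ?mulmx0 ?mul0mx ?addr0 ?add0r subrK.
have := congr1 determinant (etrans E1 (esym E2)).
rewrite !det_mulmx !det_ublock !det_lblock !det1 !mul1r !mulr1 !det_mx11 => <-.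
by rewrite !mxE /= mulr1n.
Qed.

Lemma qformB n (M N : 'M[R]_n) u : qform (M - N) u = qform M u - qform N u.
Proof. by rewrite /qform mulmxBr mulmxBl !mxE. Qed.

Lemma qformD n (M N : 'M[R]_n) u : qform (M + N) u = qform M u + qform N u.
Proof. by rewrite /qform mulmxDr mulmxDl !mxE. Qed.

Lemma tr11 (M : 'M[R]_1) : M^T = M.
Proof. by rewrite [M]mx11_scalar tr_scalar_mx. Qed.

Lemma sym_bil n (M : 'M[R]_n) (u v : 'cV[R]_n) : M^T = M ->
  (u^T *m M *m v) = (v^T *m M *m u).
Proof. by move=> sM; rewrite -[LHS]tr11 !trmx_mul trmxK sM mulmxA. Qed.

Lemma sumsq_ge0 n (v : 'cV[R]_n) : 0 <= (v^T *m v) 0 0.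
Proof.
rewrite mxE; apply: sumr_ge0 => i _; rewrite mxE -expr2; exact: sqr_ge0.
Qed.

Lemma posdef_det_neq0 n (M : 'M[R]_n) :
  (forall v, v != 0 -> 0 < qform M v) -> \det M != 0.
Proof.
move=> pM; apply/negP => /det0P [v nv0 vM].
have : v^T != 0 by apply: contra nv0 => /eqP/(congr1 trmx); rewrite trmxK trmx0 => ->.
move/pM; rewrite /qform trmxK vM mul0mx mxE. by rewrite ltxx.
Qed.


Lemma qformZ n (c : R) (M : 'M[R]_n) u : qform (c *: M) u = c * qform M u.
Proof. by rewrite /qform -scalemxAr -scalemxAl mxE. Qed.

Lemma posdef_det_gt0 n (M : 'M[R]_n) :
  (forall v, v != 0 -> 0 < qform M v) -> 0 < \det M.
Proof.
move=> pM.
pose P : 'M[{poly R}]_n :=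
  \matrix_(i, j) ((M i j)%:P + 'X * ((i == j)%:R - M i j)%:P).
pose p := \det P.
have pE t : p.[t] = \det (M + t *: (1%:M - M)).
  have := det_map_mx (horner_eval t) P; rewrite /p => H; rewrite -horner_evalE -H.
  congr determinant; apply/matrixP => i j; rewrite !mxE /horner_eval.
  by rewrite /= horner_evalE hornerD hornerM !hornerC hornerX.
have Nt t : 0 <= t <= 1 -> \det (M + t *: (1%:M - M)) != 0.
  move=> /andP [t0 t1]; have [->|tn1] := eqVneq t 1.
    by rewrite scale1r addrC subrK det1 oner_neq0.
  have t1' : t < 1 by rewrite lt_neqAle tn1.
  apply: posdef_det_neq0 => v nv0.
  rewrite qformD qformZ qformB.
  have qM := pM v nv0.
  have s0 : 0 <= qform 1%:M v by rewrite /qform mulmx1; exact: sumsq_ge0.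
  nra.
rewrite ltNge; apply/negP => dle.
have [|x /andP [x0 x1]] := @poly_ivt R p 0 1 ler01.
  by rewrite !pE scale0r addr0 dle scale1r addrC subrK det1 ler01.
by rewrite /root pE (negbTE (Nt x _)) // x0 x1.
Qed.


Lemma mxBE m k (M N : 'M[R]_(m,k)) i j : (M - N) i j = M i j - N i j.
Proof. by rewrite !mxE. Qed.

End Helpers.

Unset Implicit Arguments. Set Strict Implicit.
Theorem lemma4 (R : realType) (n : nat) (A G : 'M[R]_n) (u : 'cV[R]_n) :
  symmat A -> symmat G -> posdef A -> psd (G - A) -> u != 0 ->
  Vpot A G - Vpot A (SR1 A G u) = ln (1 + nu A G u ^+ 2).
Proof.
move=> sA sG [_ pA] [sD pD] un0.
rewrite /symmat in sA sG sD.
have qGE v : qform G v = qform A v + qform (G - A) v.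
  by rewrite qformB addrC subrK.
have pG : forall v, v != 0 -> 0 < qform G v.
  move=> v vn0; rewrite qGE; apply: ltr_wpDr; [exact: pD | exact: pA].
have dG := posdef_det_gt0 pG; have dA := posdef_det_gt0 pA.
have uG : G \in unitmx by rewrite unitmxE unitfE gt_eqF.
have uA : A \in unitmx by rewrite unitmxE unitfE gt_eqF.
have X0 : 0 < \det (G *m invmx A) by rewrite det_mulmx det_inv mulr_gt0 // invr_gt0.
rewrite /Vpot /SR1 /nu.
case: eqP => [Dw0|/eqP Dwn0].
  by rewrite subrr expr2 mulr0 addr0 ln1.
set D := G - A in sD pD Dwn0 *.
set w := D *m u in Dwn0 *.
set Gi := invmx G.
set x := Gi *m w.
have GGi : G *m Gi = 1%:M by rewrite mulmxV.
have GiG : Gi *m G = 1%:M by rewrite mulVmx.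
have Gx : G *m x = w by rewrite /x mulmxA GGi mul1mx.
have xn0 : x != 0.
  by apply: contra Dwn0 => /eqP x0; rewrite -Gx x0 mulmx0.
have sGi : Gi^T = Gi by rewrite /Gi trmx_inv sG.
have wT : w^T = u^T *m D by rewrite /w trmx_mul sD.
set a := qform (D *m Gi *m D) u.
set b := qform D u.
have aE : a = qform G x.
  rewrite /a /qform -(mulmxA x^T) Gx /x trmx_mul sGi wT /w.
  by rewrite !mulmxA.
have uDx : (u^T *m D *m x) 0 0 = a.
  by rewrite /a /qform /x /w !mulmxA.
have wx : (w^T *m x) 0 0 = a by rewrite wT.
have key : qform D (u - x) = b - 2 * a + qform D x.
  have trB : (u - x)^T = u^T - x^T by apply/matrixP => i j; rewrite !mxE.
  rewrite /qform trB mulmxBr !(mulmxBl u^T x^T D) !(mulmxBl (u^T *m D) (x^T *m D)) !mxBE (sym_bil x u sD) uDx.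
  rewrite -/(qform D u) -/b; ring.
have qA := pA x xn0.
have qDx := pD x.
have qDux := pD (u - x).
rewrite key in qDux.
have aE2 : a = qform A x + qform D x by rewrite aE qGE.
have c0 : 0 < b - a by lra.
have a0 : 0 < a by lra.
have b0 : 0 < b by lra.
have cE : qform (A - A *m Gi *m A) u = b - a.
  have -> : A - A *m Gi *m A = D - D *m Gi *m D.
    rewrite /D !mulmxBl !mulmxBr GGi mul1mx -!mulmxA GiG mulmx1.
    by rewrite mul1mx (opprB (G - A)) [RHS]addrC subrK.
  by rewrite qformB.
rewrite cE sqr_sqrtr ?divr_ge0 ?ltW //.
have SE : G - b^-1 *: (w *m u^T *m D) = G *m (1%:M - (b^-1 *: x) *m w^T).
  rewrite (mulmxBr G 1%:M) mulmx1 mulmxA -scalemxAr Gx -scalemxAl.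
  by rewrite wT mulmxA.
rewrite SE !det_mulmx rank1_det det_inv -scalemxAr mxE wx.
have k0 : 0 < 1 - b^-1 * a.
  rewrite subr_gt0 -(ltr_pM2l b0) mulrA mulfV ?gt_eqF // mul1r mulr1; lra.
have Xp : 0 < \det G * (\det A)^-1 by rewrite mulr_gt0 // invr_gt0.
rewrite mulrAC [ln (_ * (1 - _))]lnM ?posrE //.
have -> : 1 + a / (b - a) = (1 - b^-1 * a)^-1.
  move: c0 b0; clear; move: (a) (b) => a' b' c0 b0.
  have bn : b' != 0 by rewrite gt_eqF.
  have cn : b' - a' != 0 by rewrite gt_eqF.
  have kn : b' - a' != 0 by rewrite gt_eqF.
  rewrite -[1 - _](mulfK bn) mulrBl mul1r mulrAC mulVf // mul1r invfM invrK.
  by rewrite -[1 + _](mulfK cn) mulrDl mul1r divfK // subrK mulrC.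
rewrite lnV ?posrE //; by rewrite opprD addrA subrr add0r.
Qed.
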